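(* Consider a cellular network with $n$ base stations $\mathcal{N}=\{1,\dots,n\}$, base station $i$ serving a nonempty set $\mathcal{J}_i$ of users (pairwise disjoint), channel gains $g_{kj}>0$, noise power $\sigma^2>0$, and $$f_i(\mathbf{x};\mathbf{r},\mathbf{p})=\sum_{j\in\mathcal{J}_i}\frac{r_{ij}}{\log\Big(1+\frac{p_i g_{ij}}{\sum_{k\ne i} p_k g_{kj} x_k+\sigma^2}\Big)}.$$ Let a load vector $\mathbf{x}>\mathbf{0}$ and a rate vector $\mathbf{r}>\mathbf{0}$ be given. Then the power vectors $\mathbf{p}>\mathbf{0}$ satisfying $\mathbf{x}=\mathbf{f}(\mathbf{x};\mathbf{r},\mathbf{p})$ are exactly those satisfying the non-linear power coupling equation (NPCE) $\mathbf{p}=\mathbf{h}(\mathbf{p};\mathbf{x},\mathbf{r})$, where $\mathbf{h}(\cdot;\mathbf{x},\mathbf{r})$ is a standard interference function. Moreover, if a solution $\mathbf{p}$ exists, then it is unique and is obtained as the limit of the iterative algorithm for power (IAP): both the synchronous iteration $\mathbf{p}^{\ell}=\mathbf{h}(\mathbf{p}^{\ell-1};\mathbf{x},\mathbf{r})$, $\ell=1,2,\dots$, and the asynchronous iteration (in which, in each outer iteration, the components $i=1,\dots,n$ are updated one at a time by $p_i\leftarrow h_i(\bar{\mathbf{p}}_i;\mathbf{x},\mathbf{r})$ using the most recently updated values of the other components) converge to $\mathbf{p}$ from any initial power vector $\mathbf{p}^0>\mathbf{0}$.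
   Context: Vector inequalities are componentwise; $\log$ is natural logarithm. For a vector $\mathbf{p}$, $\bar{\mathbf{p}}_i\in\mathbb{R}^{n-1}$ denotes $\mathbf{p}$ with its $i$th component removed. For $\bar{\mathbf{p}}_i\ge\mathbf{0}$, $h_i(\bar{\mathbf{p}}_i;\mathbf{x},\mathbf{r})$ is defined as the unique $p_i>0$ satisfying $$1=\eta_i(p_i):=\sum_{j\in\mathcal{J}_i}\frac{r_{ij}/x_i}{\log\big(1+p_i\, g_{ij}/(\sum_{k\ne i}p_kg_{kj}x_k+\sigma^2)\big)}$$ (equivalently $x_i=f_i(\mathbf{x};\mathbf{r},\mathbf{p})$), and $\mathbf{h}(\mathbf{p};\mathbf{x},\mathbf{r})=(h_1(\bar{\mathbf{p}}_1;\mathbf{x},\mathbf{r}),\dots,h_n(\bar{\mathbf{p}}_n;\mathbf{x},\mathbf{r}))^T$. A function $\mathbf{I}:\mathbb{R}^n_+\to\mathbb{R}^n_+$ is a standard interference function if for all $\mathbf{p}\ge\mathbf{0}$: (positivity) $\mathbf{I}(\mathbf{p})>\mathbf{0}$; (monotonicity) $\mathbf{p}\ge\mathbf{p}'$ implies $\mathbf{I}(\mathbf{p})\ge\mathbf{I}(\mathbf{p}')$; (scalability) for all $\alpha>1$, $\alpha\mathbf{I}(\mathbf{p})>\mathbf{I}(\alpha\mathbf{p})$. *)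

(* Defs.v *)
From HB Require Import structures.
From mathcomp Require Import all_boot all_order all_algebra.
From mathcomp Require Import all_classical all_reals all_analysis.
Set Implicit Arguments. Unset Strict Implicit. Unset Printing Implicit Defensive.
Import Order.TTheory GRing.Theory Num.Theory.
Local Open Scope ring_scope.
Local Open Scope classical_set_scope.

Section Network.
Variables (R : realType) (n m : nat).
(* J i : users served by base station i; g k j : gain from BS k to user j *)
Variables (J : 'I_n -> {set 'I_m}) (g : 'I_n -> 'I_m -> R) (sigma2 : R).

Definition interf (i : 'I_n) (j : 'I_m) (x p : 'I_n -> R) : R :=
  \sum_(k < n | k != i) p k * g k j * x k + sigma2.

Definition f (r : 'I_n -> 'I_m -> R) (p x : 'I_n -> R) (i : 'I_n) : R :=
  \sum_(j in J i) r i j / ln (1 + p i * g i j / interf i j x p).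

(* eta_i(t) with the other components of p fixed (p_i itself is not used) *)
Definition eta (x : 'I_n -> R) (r : 'I_n -> 'I_m -> R) (p : 'I_n -> R)
  (i : 'I_n) (t : R) : R :=
  \sum_(j in J i) (r i j / x i) / ln (1 + t * g i j / interf i j x p).

Definition h (x : 'I_n -> R) (r : 'I_n -> 'I_m -> R) (p : 'I_n -> R)
  (i : 'I_n) : R :=
  xget 0 [set t : R | 0 < t /\ eta x r p i t = 1].

Definition upd (x : 'I_n -> R) (r : 'I_n -> 'I_m -> R) (q : 'I_n -> R)
  (i : 'I_n) : 'I_n -> R :=
  fun k => if k == i then h x r q i else q k.

Definition async_step (x : 'I_n -> R) (r : 'I_n -> 'I_m -> R)
  (p : 'I_n -> R) : 'I_n -> R :=
  foldl (upd x r) p (enum 'I_n).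

End Network.

Definition standard_interference (R : realType) (n : nat)
  (I : ('I_n -> R) -> ('I_n -> R)) : Prop :=
  (forall p, (forall i, 0 <= p i) -> forall i, 0 < I p i) /\
  (forall p p', (forall i, 0 <= p i) -> (forall i, 0 <= p' i) ->
     (forall i, p' i <= p i) -> forall i, I p' i <= I p i) /\
  (forall p, (forall i, 0 <= p i) -> forall alpha : R, 1 < alpha ->
     forall i, I (fun k => alpha * p k) i < alpha * I p i).

(* Main.v *)
Require Import Defs.
From HB Require Import structures.
From mathcomp Require Import all_boot all_order all_algebra.
From mathcomp Require Import all_classical all_reals all_analysis.
From mathcomp Require Import ring lra.
Import Order.TTheory GRing.Theory Num.Theory.
Import numFieldNormedType.Exports.
Set Implicit Arguments. Unset Strict Implicit.
Local Open Scope classical_set_scope.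
Local Open Scope ring_scope.

Section Aux.
Variable R : realType.

Lemma phi_le (a u v : R) : 0 <= a -> 0 < u -> u <= v ->
  a / ln (1 + v) <= a / ln (1 + u).
Proof.
move=> a0 u0 uv.
have lu : 0 < ln (1 + u) by apply: ln_gt0; lra.
have lv : 0 < ln (1 + v) by apply: ln_gt0; lra.
have : ln (1 + u) <= ln (1 + v) by rewrite ler_ln ?posrE; lra.
move=> h; apply: ler_wpM2l => //; rewrite lef_pV2 ?posrE //.
Qed.

Lemma phi_lt (a u v : R) : 0 < a -> 0 < u -> u < v ->
  a / ln (1 + v) < a / ln (1 + u).
Proof.
move=> a0 u0 uv.
have lu : 0 < ln (1 + u) by apply: ln_gt0; lra.
have lv : 0 < ln (1 + v) by apply: ln_gt0; lra.
have : ln (1 + u) < ln (1 + v) by rewrite ltr_ln ?posrE; lra.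
move=> h; rewrite ltr_pM2l // ltf_pV2 ?posrE //.
Qed.

Lemma cont_phi (a b' c t : R) : 0 < b' -> 0 < c -> 0 < t ->
  {for t, continuous (fun s : R => a / ln (1 + s * b' / c))}.
Proof.
move=> b'0 c0 t0.
have -> : (fun s : R => a / ln (1 + s * b' / c)) = (fun s => a / ln (1 + s * (b' / c))).
  by apply/funext => s; rewrite mulrA.
have b0 : 0 < b' / c by rewrite divr_gt0.
move: (b' / c) b0 => b b0.
apply: continuousM; first exact: cvg_cst.
apply: continuousV.
  rewrite gt_eqF //; apply: ln_gt0; rewrite ltrDl mulr_gt0 //.
have c1 : {for t, continuous (fun s : R => 1 + s * b)}.
  apply: continuousD; first exact: cvg_cst.
  apply: continuousM; first exact: cvg_id.
  exact: cvg_cst.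
have c2 : {for (1 + t * b), continuous (@ln R)}.
  apply: continuous_ln; rewrite ltr_wpDr // ?ltW // mulr_gt0 //.
exact: (continuous_comp c1 c2).
Qed.

Lemma cont_sum (I : Type) (s : seq I) (P : pred I) (F : I -> R -> R) (t : R) :
  (forall j, P j -> {for t, continuous (F j)}) ->
  {for t, continuous (fun u => \sum_(j <- s | P j) F j u)}.
Proof.
move=> HF; elim: s => [|a s IH].
  have -> : (fun u => \sum_(j <- [::] | P j) F j u) = fun=> 0.
    by apply/funext => u; rewrite big_nil.
  exact: cvg_cst.
case Pa: (P a).
  have -> : (fun u => \sum_(j <- a :: s | P j) F j u) =
     (F a + fun u => \sum_(j <- s | P j) F j u).
    by apply/funext => u; rewrite big_cons Pa.
  by apply: continuousD => //; apply: HF.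
have -> : (fun u => \sum_(j <- a :: s | P j) F j u) =
     (fun u => \sum_(j <- s | P j) F j u).
  by apply/funext => u; rewrite big_cons Pa.
exact: IH.
Qed.

End Aux.
Section Net.
Variables (R : realType) (n m : nat).
Variables (J : 'I_n -> {set 'I_m}) (g : 'I_n -> 'I_m -> R) (sigma2 : R)
  (x : 'I_n -> R) (r : 'I_n -> 'I_m -> R).
Hypothesis HJ : forall i, J i != finset.set0.
Hypothesis Hg : forall k j, 0 < g k j.
Hypothesis Hs : 0 < sigma2.
Hypothesis Hx : forall i, 0 < x i.
Hypothesis Hr : forall i j, j \in J i -> 0 < r i j.

Local Notation I q i j := (interf g sigma2 i j x q).
Local Notation E q i t := (Defs.eta J g sigma2 x r q i t).
Local Notation H q i := (h J g sigma2 x r q i).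

Definition nonneg (q : 'I_n -> R) := forall k, 0 <= q k.

Lemma interf_pos q i j : nonneg q -> 0 < I q i j.
Proof.
move=> q0; rewrite /interf.
have : 0 <= \sum_(k < n | k != i) q k * g k j * x k.
  apply: sumr_ge0 => k _; apply: mulr_ge0; last exact: ltW.
  by apply: mulr_ge0 => //; exact: ltW.
move=> HH; exact: ltr_wpDl HH Hs.
Qed.

Lemma rx_pos i j : j \in J i -> 0 < r i j / x i.
Proof. by move=> jJ; rewrite divr_gt0 ?Hr. Qed.

Lemma hasJ i : has (fun j => j \in J i) (index_enum 'I_m).
Proof.
have /set0Pn [j jJ] := HJ i.
by apply/hasP; exists j => //; rewrite mem_index_enum.
Qed.

Lemma eta_lt q i t t' : nonneg q -> 0 < t -> t < t' -> E q i t' < E q i t.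
Proof.
move=> q0 t0 tt; rewrite /Defs.eta; apply: ltr_sum; first exact: hasJ.
move=> j jJ; apply: phi_lt; first exact: rx_pos.
  by rewrite divr_gt0 ?mulr_gt0 ?interf_pos.
by rewrite ltr_pM2r ?invr_gt0 ?interf_pos // ltr_pM2r.
Qed.

Lemma eta_cmp q q' i c t : nonneg q -> nonneg q' -> 0 < c -> 0 < t ->
  (forall j, j \in J i -> I q i j <= c * I q' i j) ->
  E q i (c * t) <= E q' i t.
Proof.
move=> q0 q'0 c0 t0 HI; rewrite /Defs.eta; apply: ler_sum => j jJ.
apply: phi_le; first exact/ltW/rx_pos.
  by rewrite divr_gt0 ?mulr_gt0 ?interf_pos.
have I0 := interf_pos i j q0; have I'0 := interf_pos i j q'0.
have := HI j jJ; have := Hg i j.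
set A := I q i j; set B := I q' i j => g0 AB.
rewrite ler_pdivlMr // mulrAC ler_pdivrMr //.
have tg : 0 < t * g i j by rewrite mulr_gt0.
have -> : c * t * g i j * B = t * g i j * (c * B) by ring.
by rewrite ler_pM2l.
Qed.

Lemma eta_cmp_lt q q' i c t : nonneg q -> nonneg q' -> 0 < c -> 0 < t ->
  (forall j, j \in J i -> I q i j < c * I q' i j) ->
  E q i (c * t) < E q' i t.
Proof.
move=> q0 q'0 c0 t0 HI; rewrite /Defs.eta; apply: ltr_sum; first exact: hasJ.
move=> j jJ; apply: phi_lt; first exact/rx_pos.
  by rewrite divr_gt0 ?mulr_gt0 ?interf_pos.
have I0 := interf_pos i j q0; have I'0 := interf_pos i j q'0.
have := HI j jJ; have := Hg i j.
set A := I q i j; set B := I q' i j => g0 AB.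
rewrite ltr_pdivlMr // mulrAC ltr_pdivrMr //.
have tg : 0 < t * g i j by rewrite mulr_gt0.
have -> : c * t * g i j * B = t * g i j * (c * B) by ring.
by rewrite ltr_pM2l.
Qed.


Lemma ln1p_pos (u : R) : 0 < u -> 0 < ln (1 + u).
Proof. by move=> u0; apply: ln_gt0; rewrite ltrDl. Qed.

Lemma single_le_sum (A : {set 'I_m}) (F : 'I_m -> R) j :
  (forall k, k \in A -> 0 <= F k) -> j \in A -> F j <= \sum_(k in A) F k.
Proof.
move=> F0 jA; rewrite (bigD1 j) //= lerDl; apply: sumr_ge0 => k /andP[kA _].
exact: F0.
Qed.

Lemma eta_root q i : nonneg q -> exists t, 0 < t /\ E q i t = 1.
Proof.
move=> q0.
have /set0Pn [j0 j0J] := HJ i.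
pose a j := r i j / x i.
have a0 : forall j, j \in J i -> 0 < a j by move=> j jJ; exact: rx_pos.
pose t1 := a j0 * I q i j0 / g i j0.
have I0 : forall j, 0 < I q i j by move=> j; exact: interf_pos.
have t1p : 0 < t1.
  apply: divr_gt0; [apply: mulr_gt0; [exact: a0 | exact: I0] | exact: Hg].
have E1 : 1 <= E q i t1.
  rewrite /Defs.eta (bigD1 j0) //=.
  have -> : t1 * g i j0 / I q i j0 = a j0.
    rewrite /t1; have := I0 j0; have := Hg i j0 => g0 i0.
    field; rewrite ?gt_eqF //.
  have h1 : 1 <= a j0 / ln (1 + a j0).
    have := a0 _ j0J => aa.
    by rewrite ler_pdivlMr ?ln1p_pos // mul1r le_ln1Dx //; lra.
  have h2 : 0 <= \sum_(j in J i | j != j0) r i j / x i / ln (1 + t1 * g i j / I q i j).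
    apply: sumr_ge0 => j /andP[jJ _]; apply: divr_ge0; first exact/ltW/rx_pos.
    apply/ltW/ln1p_pos; apply: divr_gt0; [apply: mulr_gt0 => //; exact: Hg | exact: I0].
  rewrite /a in h1; lra.
pose N := (#|J i|)%:R : R.
have N0 : 0 < N by rewrite ltr0n card_gt0.
pose tj j := (expR (N * a j) - 1) * I q i j / g i j.
have tj0 : forall j, j \in J i -> 0 < tj j.
  move=> j jJ; rewrite divr_gt0 ?mulr_gt0 // subr_gt0 expR_gt1 mulr_gt0 ?a0 //.
pose T := t1 + \sum_(j in J i) tj j.
have tjT : forall j, j \in J i -> tj j <= T.
  move=> j jJ; have := @single_le_sum (J i) tj j (fun k kA => ltW (tj0 k kA)) jJ.
  rewrite /T; lra.
have E2 : E q i T <= 1.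
  rewrite /Defs.eta.
  apply: (@le_trans _ _ (\sum_(j in J i) N^-1)).
    apply: ler_sum => j jJ.
    have e1 : 0 < expR (N * a j) - 1 by rewrite subr_gt0 expR_gt1 mulr_gt0 ?a0.
    apply: (le_trans (@phi_le R (r i j / x i) (expR (N * a j) - 1) (T * g i j / I q i j) (ltW (a0 _ jJ)) e1 _)).
      have -> : expR (N * a j) - 1 = tj j * g i j / I q i j.
        rewrite /tj; have := I0 j; have := Hg i j => g0 i0.
        field; rewrite ?gt_eqF //.
      by rewrite ler_pM2r ?invr_gt0 // ler_pM2r // tjT.
    rewrite addrC subrK expRK /a.
    have := a0 _ jJ; rewrite /a => aa.
    rewrite le_eqVlt; apply/orP; left; apply/eqP; field.
    by rewrite -/N (gt_eqF N0) (gt_eqF (Hx i)) (gt_eqF (Hr jJ)).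
  have -> : \sum_(j in J i) N^-1 = N^-1 *+ #|J i| by apply: sumr_const.
  by rewrite -mulr_natr mulVf ?gt_eqF.
have t1T : t1 <= T.
  by rewrite /T lerDl; apply: sumr_ge0 => j jJ; exact: ltW (tj0 _ jJ).
have [c cI Ec] : exists2 c, c \in `[t1, T] & E q i c = 1.
  apply: IVT => //.
    apply: continuous_in_subspaceT => s sI.
    have s0 : 0 < s.
      by move: sI; rewrite inE /= in_itv /= => /andP[+ _]; apply: lt_le_trans.
    apply: cont_sum => j jJ.
    exact: (@cont_phi R (r i j / x i) (g i j) (I q i j) s (Hg i j) (I0 j) s0).
  by apply/andP; split; [rewrite ge_min E2 orbT | rewrite le_max E1].
exists c; split => //.
by move: cI; rewrite in_itv /= => /andP[+ _]; apply: lt_le_trans.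
Qed.


Lemma h_spec q i : nonneg q -> 0 < H q i /\ E q i (H q i) = 1.
Proof.
move=> q0; rewrite /h.
exact: (xgetPex 0 (eta_root i q0)).
Qed.

Lemma h_uniq q i t : nonneg q -> 0 < t -> E q i t = 1 -> t = H q i.
Proof.
move=> q0 t0 Et; have [h0 Eh] := h_spec i q0.
case: (ltgtP t (H q i)) => // lt.
  by have := eta_lt i q0 t0 lt; rewrite Et Eh ltxx.
by have := eta_lt i q0 h0 lt; rewrite Et Eh ltxx.
Qed.

Lemma h_cmp q q' i c : nonneg q -> nonneg q' -> 0 < c ->
  (forall j, j \in J i -> I q i j <= c * I q' i j) -> H q i <= c * H q' i.
Proof.
move=> q0 q'0 c0 HI; have [h0 Eh] := h_spec i q0; have [h'0 Eh'] := h_spec i q'0.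
rewrite leNgt; apply/negP => lt.
have e1 := eta_cmp q0 q'0 c0 h'0 HI.
have e2 := eta_lt i q0 (mulr_gt0 c0 h'0) lt.
by move: (lt_le_trans e2 e1); rewrite Eh Eh' ltxx.
Qed.

Lemma h_cmp_lt q q' i c : nonneg q -> nonneg q' -> 0 < c ->
  (forall j, j \in J i -> I q i j < c * I q' i j) -> H q i < c * H q' i.
Proof.
move=> q0 q'0 c0 HI; have [h0 Eh] := h_spec i q0; have [h'0 Eh'] := h_spec i q'0.
rewrite ltNge; apply/negP; rewrite le_eqVlt => /orP[/eqP e|lt].
  have e1 := eta_cmp_lt q0 q'0 c0 h'0 HI.
  by move: e1; rewrite e Eh Eh' ltxx.
have e1 := eta_cmp_lt q0 q'0 c0 h'0 HI.
have e2 := eta_lt i q0 (mulr_gt0 c0 h'0) lt.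
by move: (lt_trans e2 e1); rewrite Eh Eh' ltxx.
Qed.

End Net.

Section Fix.
Variables (R : realType) (n m : nat).
Variables (J : 'I_n -> {set 'I_m}) (g : 'I_n -> 'I_m -> R) (sigma2 : R)
  (x : 'I_n -> R) (r : 'I_n -> 'I_m -> R).
Hypothesis HJ : forall i, J i != finset.set0.
Hypothesis Hg : forall k j, 0 < g k j.
Hypothesis Hs : 0 < sigma2.
Hypothesis Hx : forall i, 0 < x i.
Hypothesis Hr : forall i j, j \in J i -> 0 < r i j.
Variable ps : 'I_n -> R.
Hypothesis Hps : forall k, 0 < ps k.
Hypothesis Hfix : forall i, h J g sigma2 x r ps i = ps i.

Local Notation I q i j := (interf g sigma2 i j x q).
Local Notation H q i := (h J g sigma2 x r q i).
Local Notation S q i j := (\sum_(k < n | k != i) q k * g k j * x k).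

Definition M := \sum_(k < n) \sum_(j < m) ps k * g k j * x k.
Definition kap := M / (M + sigma2).

Lemma T0 k j : 0 <= ps k * g k j * x k.
Proof. by rewrite !mulr_ge0 // ltW. Qed.

Lemma S0 i j : 0 <= S ps i j.
Proof. by apply: sumr_ge0 => k _; exact: T0. Qed.

Lemma SleM i j : S ps i j <= M.
Proof.
apply: (@le_trans _ _ (\sum_(k < n | k != i) \sum_(j' < m) ps k * g k j' * x k)).
  apply: ler_sum => k _; rewrite (bigD1 j) //= lerDl.
  by apply: sumr_ge0 => j' _; exact: T0.
rewrite /M [X in _ <= X](bigID (fun k => k != i)) /= lerDl.
by apply: sumr_ge0 => k _; apply: sumr_ge0 => j' _; exact: T0.
Qed.

Lemma M0 : 0 <= M.
Proof. by apply: sumr_ge0 => k _; apply: sumr_ge0 => j' _; exact: T0. Qed.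

Lemma kap0 : 0 <= kap.
Proof. by rewrite /kap divr_ge0 ?M0 // addr_ge0 ?M0 ?ltW. Qed.

Lemma kap1 : kap < 1.
Proof.
have := M0; have := Hs; rewrite /kap => hs m0.
rewrite ltr_pdivrMr; lra.
Qed.

Lemma Kfact i j : S ps i j <= kap * (S ps i j + sigma2).
Proof.
have := SleM i j; have := S0 i j; have := M0.
rewrite /kap; set s := S ps i j => M0' s0 sM.
have := Hs => hs.
rewrite mulrAC ler_pdivlMr; last lra.
nra.
Qed.

Definition box (a b : R) (q : 'I_n -> R) :=
  forall k, (1 - b) * ps k <= q k <= (1 + a) * ps k.

Lemma box_nonneg a b q : b <= 1 -> box a b q -> nonneg q.
Proof.
move=> b1 bx k; have /andP[l _] := bx k; apply: le_trans l.
by apply: mulr_ge0; [rewrite subr_ge0 | exact: ltW].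
Qed.

Lemma box_step a b q i : 0 <= a -> 0 <= b -> b <= 1 -> box a b q ->
  (1 - kap * b) * ps i <= H q i <= (1 + kap * a) * ps i.
Proof.
move=> a0 b0 b1 bx.
have q0 := box_nonneg b1 bx.
have ps0 : nonneg ps by move=> k; exact: ltW.
have k0 := kap0; have k1 := kap1.
have Sup : forall j, S q i j <= (1 + a) * S ps i j.
  move=> j; rewrite mulr_sumr; apply: ler_sum => k _.
  have /andP[_ u] := bx k.
  rewrite !mulrA; apply: ler_wpM2r; first exact: ltW.
  by apply: ler_wpM2r => //; exact: ltW.
have Slo : forall j, (1 - b) * S ps i j <= S q i j.
  move=> j; rewrite mulr_sumr; apply: ler_sum => k _.
  have /andP[l _] := bx k.
  rewrite !mulrA; apply: ler_wpM2r; first exact: ltW.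
  by apply: ler_wpM2r => //; exact: ltW.
apply/andP; split.
  have cpos : 0 < 1 - kap * b by nra.
  have e : H ps i <= (1 - kap * b)^-1 * H q i.
    apply: h_cmp => //; first by rewrite invr_gt0.
    move=> j jJ.
    have low : (1 - kap * b) * I ps i j <= I q i j.
      rewrite /interf; have := Slo j; have := Kfact i j; have := S0 i j.
      set s := S ps i j; set s' := S q i j => s0 K L.
      have := Hs => hs; nra.
    apply: (le_trans _ (ler_wpM2l _ low)); last by rewrite invr_ge0 ltW.
    by rewrite mulrA mulVf ?mul1r // gt_eqF.
  have := ler_wpM2l (ltW cpos) e.
  by rewrite mulrA mulfV ?mul1r ?gt_eqF // Hfix.
have cpos : 0 < 1 + kap * a by nra.
rewrite -(Hfix i); apply: h_cmp => // j jJ.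
rewrite /interf; have := Sup j; have := Kfact i j; have := S0 i j.
set s := S ps i j; set s' := S q i j => s0 K L.
have := Hs => hs; nra.
Qed.


Lemma tight_loose a b k v : 0 <= a -> 0 <= b ->
  (1 - kap * b) * ps k <= v <= (1 + kap * a) * ps k ->
  (1 - b) * ps k <= v <= (1 + a) * ps k.
Proof.
move=> a0 b0 /andP[l u]; have k0 := kap0; have k1 := kap1; have p0 := Hps k.
apply/andP; split.
  apply: le_trans l; apply: ler_wpM2r; [exact: ltW | nra].
apply: le_trans u _; apply: ler_wpM2r; [exact: ltW | nra].
Qed.

Lemma sync_box a b q : 0 <= a -> 0 <= b -> b <= 1 -> box a b q ->
  box (kap * a) (kap * b) (h J g sigma2 x r q).
Proof. move=> a0 b0 b1 bx k. exact: (box_step k a0 b0 b1 bx). Qed.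

Lemma fold_box a b (s : seq 'I_n) : 0 <= a -> 0 <= b -> b <= 1 ->
  forall q (P : pred 'I_n), box a b q ->
  (forall k, P k -> (1 - kap * b) * ps k <= q k <= (1 + kap * a) * ps k) ->
  box a b (foldl (upd J g sigma2 x r) q s) /\
  (forall k, P k || (k \in s) ->
     (1 - kap * b) * ps k <= foldl (upd J g sigma2 x r) q s k <= (1 + kap * a) * ps k).
Proof.
move=> a0 b0 b1; elim: s => [|i s IH] q P bx Pt /=.
  by split => // k; rewrite in_nil orbF; exact: Pt.
have bx' : box a b (upd J g sigma2 x r q i).
  move=> k; rewrite /upd; case: eqP => [-> | _]; last exact: bx.
  by apply: tight_loose => //; apply: box_step.
have Pt' : forall k, P k || (k == i) ->
    (1 - kap * b) * ps k <= upd J g sigma2 x r q i k <= (1 + kap * a) * ps k.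
  move=> k Pk; rewrite /upd; case: eqP => [-> | ne]; first exact: box_step.
  by move: Pk => /orP[/Pt // | /eqP].
have [bxf Hf] := IH (upd J g sigma2 x r q i) (fun k => P k || (k == i)) bx' Pt'.
split => // k Pk; apply: Hf; move: Pk; rewrite in_cons.
by case: (P k) => //=; case: (k == i).
Qed.

Lemma async_box a b q : 0 <= a -> 0 <= b -> b <= 1 -> box a b q ->
  box (kap * a) (kap * b) (async_step J g sigma2 x r q).
Proof.
move=> a0 b0 b1 bx k; rewrite /async_step.
have [_ Hf] := fold_box (enum 'I_n) a0 b0 b1 (P := pred0) bx (fun k (F : false) => False_ind _ (notF F)).
by apply: Hf; rewrite mem_enum.
Qed.

Lemma iter_box (T : ('I_n -> R) -> ('I_n -> R)) a0 b0 p0 :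
  (forall a b q, 0 <= a -> 0 <= b -> b <= 1 -> box a b q -> box (kap * a) (kap * b) (T q)) ->
  0 <= a0 -> 0 <= b0 -> b0 <= 1 -> box a0 b0 p0 ->
  forall l, box (kap ^+ l * a0) (kap ^+ l * b0) (iter l T p0).
Proof.
move=> HT a00 b00 b01 bx0; elim => [|l IH]; first by rewrite expr0 !mul1r.
have k0 := kap0; have k1 := kap1.
have kl0 : 0 <= kap ^+ l by rewrite exprn_ge0.
have kl1 : kap ^+ l <= 1 by rewrite exprn_ile1 // ltW.
rewrite iterS exprS -[kap * kap ^+ l * a0]mulrA -[kap * kap ^+ l * b0]mulrA; apply: HT => //; rewrite ?mulr_ge0 //.
by nra.
Qed.

Lemma box_cvg (u : nat -> 'I_n -> R) a0 b0 :
  (forall l, box (kap ^+ l * a0) (kap ^+ l * b0) (u l)) ->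
  forall i, (fun l => u l i) @ \oo --> ps i.
Proof.
move=> bx i.
have Hk : (fun l => kap ^+ l) @ \oo --> 0.
  by apply: cvg_expr; rewrite ger0_norm ?kap0 // kap1.
have L1 : (fun l => (1 - kap ^+ l * b0) * ps i) @ \oo --> (1 - 0 * b0) * ps i.
  apply: cvgM; last exact: cvg_cst.
  apply: cvgB; first exact: cvg_cst.
  by apply: cvgM => //; exact: cvg_cst.
have L2 : (fun l => (1 + kap ^+ l * a0) * ps i) @ \oo --> (1 + 0 * a0) * ps i.
  apply: cvgM; last exact: cvg_cst.
  apply: cvgD; first exact: cvg_cst.
  by apply: cvgM => //; exact: cvg_cst.
rewrite mul0r subr0 mul1r in L1; rewrite mul0r addr0 mul1r in L2.
apply: (squeeze_cvgr _ L1 L2).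
by apply: nearW => l; exact: bx.
Qed.


Lemma init_box p0 : (forall k, 0 < p0 k) ->
  exists a0 b0, [/\ 0 <= a0, 0 <= b0, b0 <= 1 & box a0 b0 p0].
Proof.
move=> Hp0.
pose a0 := \sum_(k < n) p0 k / ps k.
pose S := \sum_(k < n) ps k / p0 k.
have a00 : 0 <= a0 by apply: sumr_ge0 => k _; rewrite divr_ge0 ?ltW.
have S0 : 0 <= S by apply: sumr_ge0 => k _; rewrite divr_ge0 ?ltW.
have c0 : 0 < (1 + S)^-1 by rewrite invr_gt0; lra.
have c1 : (1 + S)^-1 <= 1 by rewrite invf_le1; lra.
exists a0, (1 - (1 + S)^-1); split => //; try lra.
move=> k; have pk := Hps k; have qk := Hp0 k.
have r1 : p0 k / ps k <= a0.
  rewrite /a0 (bigD1 k) //= lerDl; apply: sumr_ge0 => j _; rewrite divr_ge0 ?ltW //.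
have r2 : ps k / p0 k <= S.
  rewrite /S (bigD1 k) //= lerDl; apply: sumr_ge0 => j _; rewrite divr_ge0 ?ltW //.
rewrite ler_pdivrMr // in r1; rewrite ler_pdivrMr // in r2.
have -> : 1 - (1 - (1 + S)^-1) = (1 + S)^-1 by ring.
apply/andP; split; last nra.
rewrite mulrC ler_pdivrMr; [nra | lra].
Qed.

End Fix.

Theorem theorem2 (R : realType) (n m : nat)
  (J : 'I_n -> {set 'I_m}) (g : 'I_n -> 'I_m -> R) (sigma2 : R)
  (x : 'I_n -> R) (r : 'I_n -> 'I_m -> R) :
  (forall i, J i != finset.set0) ->
  (forall i i', i != i' -> fintype.disjoint (mem (J i)) (mem (J i'))) ->
  (forall k j, 0 < g k j) ->
  0 < sigma2 ->
  (forall i, 0 < x i) ->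
  (forall i j, j \in J i -> 0 < r i j) ->
  (* solutions of x = f(x;r,p) are exactly the solutions of the NPCE *)
  (forall p : 'I_n -> R, (forall i, 0 < p i) ->
     ((forall i, x i = f J g sigma2 r p x i) <->
      (forall i, p i = h J g sigma2 x r p i))) /\
  (* h(.; x, r) is a standard interference function *)
  standard_interference (h J g sigma2 x r) /\
  (* uniqueness and convergence of the IAP (synchronous and asynchronous) *)
  (forall p : 'I_n -> R, (forall i, 0 < p i) ->
     (forall i, x i = f J g sigma2 r p x i) ->
     (forall p' : 'I_n -> R, (forall i, 0 < p' i) ->
        (forall i, x i = f J g sigma2 r p' x i) -> p' = p) /\
     (forall p0 : 'I_n -> R, (forall i, 0 < p0 i) ->
        (forall i, (fun l : nat => iter l (h J g sigma2 x r) p0 i) @ \oo --> p i) /\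
        (forall i, (fun l : nat => iter l (async_step J g sigma2 x r) p0 i)
                     @ \oo --> p i))).
Proof.
move=> HJ _ Hg Hs Hx Hr.
have Hfe : forall p i, x i = f J g sigma2 r p x i <->
    Defs.eta J g sigma2 x r p i (p i) = 1.
  move=> p i; rewrite /Defs.eta /f.
  set F := \sum_(j in J i) _.
  have -> : \sum_(j in J i) r i j / x i / ln (1 + p i * g i j / interf g sigma2 i j x p)
      = F / x i.
    by rewrite /F mulr_suml; apply: eq_bigr => j _; rewrite mulrAC.
  have xi0 : x i != 0 by rewrite gt_eqF.
  split => [<- | e]; first by rewrite mulfV.
  by rewrite -[F](@divfK _ (x i)) // e mul1r.
have P1 : forall p : 'I_n -> R, (forall i, 0 < p i) ->
     ((forall i, x i = f J g sigma2 r p x i) <->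
      (forall i, p i = h J g sigma2 x r p i)).
  move=> p Hp; have p0 : nonneg p by move=> k; exact: ltW.
  split => e i.
    by apply: (h_uniq HJ Hg Hs Hx Hr p0 (Hp i)); apply/Hfe.
  apply/Hfe; have [_ Eh] := h_spec HJ Hg Hs Hx Hr i p0.
  by rewrite -(e i) in Eh.
split => //.
split.
  split; first by move=> p p0 i; have [] := h_spec HJ Hg Hs Hx Hr i p0.
  split.
    move=> p p' p0 p'0 le i.
    rewrite -[X in _ <= X]mul1r; apply: (h_cmp HJ Hg Hs Hx Hr p'0 p0 ltr01) => j _.
    rewrite mul1r /interf lerD2r; apply: ler_sum => k _.
    apply: ler_wpM2r; first exact: ltW.
    by apply: ler_wpM2r; [exact: ltW | exact: le].
  move=> p p0 al al1 i.
  have ap0 : nonneg (fun k => al * p k).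
    by move=> k; rewrite mulr_ge0 // ?p0 // ltW // (lt_trans ltr01).
  apply: (h_cmp_lt HJ Hg Hs Hx Hr ap0 p0 (lt_trans ltr01 al1)) => j _.
  rewrite /interf.
  have -> : \sum_(k < n | k != i) al * p k * g k j * x k
      = al * \sum_(k < n | k != i) p k * g k j * x k.
    by rewrite mulr_sumr; apply: eq_bigr => k _; rewrite !mulrA.
  have : 0 <= \sum_(k < n | k != i) p k * g k j * x k.
    apply: sumr_ge0 => k _; apply: mulr_ge0; last exact: ltW.
    by apply: mulr_ge0 => //; exact: ltW.
  move: (\sum_(k < n | k != i) p k * g k j * x k) => s s0.
  have := Hs => hs; nra.
move=> p Hp Hpf.
have Hfix : forall i, h J g sigma2 x r p i = p i.
  by move=> i; rewrite -((P1 p Hp).1 Hpf i).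
have conv : forall p0 : 'I_n -> R, (forall i, 0 < p0 i) ->
    (forall i, (fun l : nat => iter l (h J g sigma2 x r) p0 i) @ \oo --> p i) /\
    (forall i, (fun l : nat => iter l (async_step J g sigma2 x r) p0 i) @ \oo --> p i).
  move=> p0 Hp0.
  have [a0 [b0 [a00 b00 b01 bx]]] := init_box Hp Hp0.
  split => i.
    apply: (box_cvg Hg Hs Hx Hp (a0 := a0) (b0 := b0)) => l.
    apply: (iter_box Hg Hs Hx Hp _ a00 b00 b01 bx) => a b q a0' b0' b1' bx'.
    exact: (sync_box HJ Hg Hs Hx Hr Hp Hfix).
  apply: (box_cvg Hg Hs Hx Hp (a0 := a0) (b0 := b0)) => l.
  apply: (iter_box Hg Hs Hx Hp _ a00 b00 b01 bx) => a b q a0' b0' b1' bx'.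
  exact: (async_box HJ Hg Hs Hx Hr Hp Hfix).
split => // p' Hp' Hp'f.
have Hfix' : forall i, h J g sigma2 x r p' i = p' i.
  by move=> i; rewrite -((P1 p' Hp').1 Hp'f i).
have it : forall l, iter l (h J g sigma2 x r) p' = p'.
  elim => [|l IH] //=; rewrite IH; apply/funext => i; exact: Hfix'.
apply/funext => i.
have [c _] := conv p' Hp'.
have c1 := c i.
have c2 : (fun l : nat => iter l (h J g sigma2 x r) p' i) @ \oo --> p' i.
  under eq_fun do rewrite it.
  exact: cvg_cst.
exact: (cvg_unique _ c2 c1).
Qed.
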